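(* For all positive integers $n$, $$\sum_{j=0}^{n-2}\frac{A_{n,n-1,j}}{(1+x)^{n-1-j}(1+y)^{n-1-j}}+\frac{xy-(n-1)(x+y)}{xy}=\left(\frac{xy}{(1+x)(1+y)}\right)^{n-1}.$$
   Context: For a positive integer $n$ and $0\le j\le n-2$, $$A_{n,n-1,j}=\frac{(-1)^{n+j}}{xy}\sum_{l=j}^{n}\left(\binom lj\binom{n+j-1-l}{j}x^{l-j}y^{n-1-l}+\binom lj\binom{n+j-l}{j}x^{l-j}y^{n-l}\right),$$ where $x,y$ are indeterminates and binomial coefficients $\binom ab$ are $0$ if $b<0$ or $a<b$. *)

(* Defs.v *)
From HB Require Import structures.
From mathcomp Require Import all_boot all_order all_algebra.
Set Implicit Arguments. Unset Strict Implicit. Unset Printing Implicit Defensive.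
Import Order.TTheory GRing.Theory Num.Theory.
Local Open Scope ring_scope.

(* Binomial coefficient with integer top entry: 0 when a < 0
   (the bottom entry is a nat, so the case b < 0 never arises;
   the case a < b is handled by 'C itself). *)
Definition binz (a : int) (b : nat) : nat :=
  match a with
  | Posz m => 'C(m, b)
  | Negz _ => 0%N
  end.

(* A_{n,n-1,j}(x,y); exponents of y may be negative (integer powers). *)
Definition Acoef (F : fieldType) (x y : F) (n j : nat) : F :=
  (-1) ^+ (n + j) / (x * y) *
  \sum_(j <= l < n.+1)
    ( (binz l j * binz (n%:Z + j%:Z - 1 - l%:Z) j)%:R * x ^+ (l - j)
        * y ^ (n%:Z - 1 - l%:Z)
    + (binz l j * binz (n%:Z + j%:Z - l%:Z) j)%:R * x ^+ (l - j)
        * y ^ (n%:Z - l%:Z)).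

(* Main.v *)
Require Import Defs.
From HB Require Import structures.
From mathcomp Require Import all_boot all_order all_algebra.
From mathcomp Require Import ring zify.
Import Order.TTheory GRing.Theory Num.Theory.
Local Open Scope ring_scope.

Set Implicit Arguments. Unset Strict Implicit.

Definition sh (F : fieldType) (f : nat -> F) (k : nat) : F :=
  if k is k'.+1 then f k' else 0.

Definition gg (F : fieldType) (x y : F) (p q k : nat) : F :=
  \sum_(i < k.+1) ('C(i + p, p) * 'C(k - i + q, q))%:R * x ^+ i * y ^+ (k - i).

Lemma gg_rev (F : fieldType) (x y : F) p q k : gg x y p q k = gg y x q p k.
Proof.
rewrite /gg (reindex_inj rev_ord_inj) /=.
apply: eq_bigr => i _; have := ltn_ord i; rewrite subSS => hi.
rewrite subKn // mulnC; ring.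
Qed.

Lemma ggA (F : fieldType) (x y : F) p q k :
  gg x y p.+1 q k = x * sh (gg x y p.+1 q) k + gg x y p q k.
Proof.
case: k => [|k].
  by rewrite /gg !big_ord1 /= !add0n !binn; ring.
rewrite /= /gg big_ord_recl [X in _ = _ + X]big_ord_recl /= mulr_sumr.
rewrite !add0n !binn addrCA; congr (_ + _).
rewrite -big_split; apply: eq_bigr => i _ /=; rewrite subSS.
rewrite !addSn !addnS binS.
rewrite /bump /= add1n mulnDl natrD !natrM exprS; ring.
Qed.

Lemma ggB (F : fieldType) (x y : F) p q k :
  gg x y p q.+1 k = y * sh (gg x y p q.+1) k + gg x y p q k.
Proof.
case: k => [|k] /=.
  by rewrite /gg !big_ord1 /= !add0n !binn; ring.
by rewrite !(gg_rev x y) ggA.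
Qed.

Definition Lop (F : fieldType) (x y : F) (f : nat -> F) (k : nat) : F :=
  f k - (x + y) * sh f k + x * y * sh (sh f) k.

Lemma sh_ext (F : fieldType) (f g : nat -> F) : f =1 g -> sh f =1 sh g.
Proof. by move=> h [|k] //=. Qed.

Lemma Lg (F : fieldType) (x y : F) j k :
  Lop x y (gg x y j.+1 j.+1) k = gg x y j j k.
Proof.
have h1 := ggA x y j j.+1 k.
have h2 := ggB x y j j k.
have h3 : sh (gg x y j j.+1) k = sh (gg x y j.+1 j.+1) k
   - x * sh (sh (gg x y j.+1 j.+1)) k.
  case: k {h1 h2} => [|k] /=; first by ring.
  by rewrite (ggA x y j j.+1 k); ring.
rewrite /Lop h1 h2 h3; ring.
Qed.

Lemma gg00S (F : fieldType) (x y : F) k :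
  gg x y 0 0 k.+1 = y ^+ k.+1 + x * gg x y 0 0 k.
Proof.
rewrite /gg big_ord_recl /= mulr_sumr; congr (_ + _).
  by rewrite !bin0 mul1n; ring.
by apply: eq_bigr => i _; rewrite /bump /= add1n subSS !bin0 exprS; ring.
Qed.

Lemma Lg0 (F : fieldType) (x y : F) k :
  Lop x y (gg x y 0 0) k = (k == 0)%:R.
Proof.
have g0 : gg x y 0 0 0 = 1 by rewrite /gg big_ord1 /= !bin0 mul1n; ring.
case: k => [|[|k]]; rewrite /Lop /=.
- by rewrite g0; ring.
- by rewrite gg00S g0; ring.
- by rewrite !gg00S !exprS; ring.
Qed.

Definition ee (F : fieldType) (x y : F) j k := gg x y j j k + sh (gg x y j j) k.

Lemma Lop_e (F : fieldType) (x y : F) (f : nat -> F) k :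
  Lop x y (fun k => f k + sh f k) k = Lop x y f k + sh (Lop x y f) k.
Proof. by case: k => [|[|k]]; rewrite /Lop /=; ring. Qed.

Lemma Le (F : fieldType) (x y : F) j k :
  Lop x y (ee x y j.+1) k = ee x y j k.
Proof.
rewrite /ee Lop_e Lg; congr (_ + _).
by apply: sh_ext => m; rewrite Lg.
Qed.

Lemma Le0 (F : fieldType) (x y : F) k :
  Lop x y (ee x y 0) k = (k == 0)%:R + (k == 1)%:R.
Proof.
rewrite /ee Lop_e Lg0; congr (_ + _).
by case: k => [|k] //=; rewrite Lg0.
Qed.

Definition TT (F : fieldType) (u : F) (E : nat -> nat -> F) K :=
  \sum_(j < K.+1) (- u) ^+ j * E j (K - j)%N.

Lemma TT_sh (F : fieldType) (u : F) E K :
  sh (TT u E) K = TT u (fun j => sh (E j)) K.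
Proof.
case: K => [|K] /=.
  by rewrite /TT big_ord1 /= mulr0.
rewrite /TT [in RHS]big_ord_recr /=.
rewrite subnn mulr0 addr0.
apply: eq_bigr => i _; have := ltn_ord i => hi.
by rewrite subSn.
Qed.

Lemma TT_L (F : fieldType) (x y : F) u E K :
  Lop x y (TT u E) K = TT u (fun j => Lop x y (E j)) K.
Proof.
rewrite /Lop TT_sh (sh_ext (@TT_sh F u E)) !TT_sh /TT !mulr_sumr -sumrB -big_split
  /=.
apply: eq_bigr => i _; ring.
Qed.

Definition DD (F : fieldType) (x y : F) K := TT ((1 + x) * (1 + y)) (ee x y) K.

Lemma D_rec (F : fieldType) (x y : F) K :
  Lop x y (DD x y) K = (K == 0)%:R + (K == 1)%:R
     - (1 + x) * (1 + y) * sh (DD x y) K.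
Proof.
rewrite /DD TT_L /TT big_ord_recl /= subn0 Le0 mul1r.
case: K => [|K] /=.
  by rewrite big_ord0 mulr0 subr0 addr0.
rewrite /TT mulr_sumr; congr (_ + _).
rewrite -sumrN; apply: eq_bigr => i _.
rewrite /bump /= add1n subSS Le exprS; ring.
Qed.

Lemma D_val (F : fieldType) (x y : F) K : DD x y K = (- (x * y)) ^+ K.
Proof.
have e0 : DD x y 0 = 1.
  have := D_rec x y 0; rewrite /Lop /= => h.
  have -> : DD x y 0 = DD x y 0 - (x + y) * 0 + x * y * 0 by ring.
  rewrite h; ring.
have e1 : DD x y 1 = - (x * y).
  have := D_rec x y 1; rewrite /Lop /= e0 => h.
  have -> : DD x y 1 = (DD x y 1 - (x + y) * 1 + x * y * 0) + (x + y) by ring.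
  rewrite h; ring.
suff : DD x y K = (- (x * y)) ^+ K /\ DD x y K.+1 = (- (x * y)) ^+ K.+1 by case.
elim: K => [|K [IH1 IH2]]; first by rewrite e0 e1 expr1.
split=> //.
have := D_rec x y K.+2; rewrite /Lop /= => h.
have -> : DD x y K.+2 = (DD x y K.+2 - (x + y) * DD x y K.+1 + x * y * DD x y K)
   + (x + y) * DD x y K.+1 - x * y * DD x y K by ring.
rewrite h IH1 IH2 !exprS; ring.
Qed.

Lemma Acoef_ee (F : fieldType) (x y : F) n j : (j < n)%N ->
  Acoef x y n j = (-1) ^+ (n + j) / (x * y) * ee x y j (n - j).
Proof.
move=> hjn; have [k ->] : exists k, n = (k.+1 + j)%N by exists (n - j).-1; lia.
rewrite /Acoef; congr (_ * _).
rewrite -{1}(add0n j) big_addn.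
have -> : ((k.+1 + j).+1 - j = k.+2)%N by lia.
have -> : ((k.+1 + j) - j = k.+1)%N by lia.
rewrite big_mkord big_split /= /ee /=; rewrite [RHS]addrC; congr (_ + _).
rewrite big_ord_recr /=.
have -> : ((k.+1 + j)%:Z + j%:Z - 1 - (k.+1 + j)%:Z) = j%:Z - 1 by lia.
have -> : binz (j%:Z - 1) j = 0%N.
  case: j {hjn} => [|j]; first by [].
  have -> : (j.+1)%:Z - 1 = j%:Z by lia.
  by rewrite /= bin_small.
rewrite muln0 mul0r mul0r addr0.
apply: eq_bigr => i _; have := ltn_ord i => hi.
have -> : ((k.+1 + j)%:Z + j%:Z - 1 - (i + j)%:Z) = (k - i + j)%N :> int by lia.
have -> : ((k.+1 + j)%:Z - 1 - (i + j)%:Z) = (k - i)%N :> int by lia.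
by rewrite addnK /=.
apply: eq_bigr => i _; have := ltn_ord i => hi.
have -> : ((k.+1 + j)%:Z + j%:Z - (i + j)%:Z) = (k.+1 - i + j)%N :> int by lia.
have -> : ((k.+1 + j)%:Z - (i + j)%:Z) = (k.+1 - i)%N :> int by lia.
by rewrite addnK /=.
Qed.

Lemma ee_m1 (F : fieldType) (x y : F) m : ee x y m 1 = 1 + (m.+1)%:R * (x + y).
Proof.
rewrite /ee /= /gg big_ord1 big_ord_recr big_ord1 /= !add0n add1n binn binSn subnn.
rewrite !muln1 !mul1n; ring.
Qed.

Lemma ee_0 (F : fieldType) (x y : F) m : ee x y m 0 = 1.
Proof. by rewrite /ee /= /gg big_ord1 /= add0n binn; ring. Qed.

Lemma final_alg (F : fieldType) (x y S : F) m : x * y != 0 -> (1 + x) * (1 + y) != 0 ->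
  S + (- ((1 + x) * (1 + y))) ^+ m * (1 + (m.+1)%:R * (x + y))
    + (- ((1 + x) * (1 + y))) ^+ m.+1 * 1 = (- (x * y)) ^+ m.+1 ->
  (-1) ^+ m.+1 / (x * y * ((1 + x) * (1 + y)) ^+ m) * S
    + (x * y - m%:R * (x + y)) / (x * y) = (x * y / ((1 + x) * (1 + y))) ^+ m.
Proof.
move=> hxy hu hD.
have -> : S = (-1) ^+ m.+1 * ((x * y) ^+ m.+1
      + ((1 + x) * (1 + y)) ^+ m * (1 + (m.+1)%:R * (x + y))
      - ((1 + x) * (1 + y)) ^+ m.+1).
  have -> : S = (- (x * y)) ^+ m.+1 - (- ((1 + x) * (1 + y))) ^+ m * (1 + (m.+1)%:R * (x + y))
    - (- ((1 + x) * (1 + y))) ^+ m.+1 * 1 by rewrite -hD; ring.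
  rewrite !(exprNn (x * y)) !(exprNn ((1 + x) * (1 + y))) !exprS; ring.
have sq : (-1) ^+ m.+1 * (-1) ^+ m.+1 = 1 :> F.
  by rewrite -exprMn mulrNN mulr1 expr1n.
set Q := (_ - _ ^+ m.+1).
have -> : (-1) ^+ m.+1 / (x * y * ((1 + x) * (1 + y)) ^+ m) * ((-1) ^+ m.+1 * Q)
   = ((-1) ^+ m.+1 * (-1) ^+ m.+1) * (Q / (x * y * ((1 + x) * (1 + y)) ^+ m)) by ring.
rewrite sq mul1r /Q !exprS expr_div_n -natr1.
have hU : ((1 + x) * (1 + y)) ^+ m != 0 by rewrite expf_neq0.
set U := ((1 + x) * (1 + y)) ^+ m.
set P := (x * y) ^+ m.
field.
by move: hxy; rewrite mulf_eq0 negb_or hU => /andP[-> ->].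
Qed.

Unset Implicit Arguments. Set Strict Implicit.

Theorem lemma7 (F : fieldType) (x y : F) (n : nat)
  (hx : x != 0) (hy : y != 0) (hx1 : 1 + x != 0) (hy1 : 1 + y != 0)
  (hn : (0 < n)%N) :
  \sum_(0 <= j < n.-1)
      Acoef x y n j / ((1 + x) ^+ (n.-1 - j) * (1 + y) ^+ (n.-1 - j))
    + (x * y - (n.-1)%:R * (x + y)) / (x * y)
  = (x * y / ((1 + x) * (1 + y))) ^+ n.-1.
Proof.
case: n hn => [//|m] _ /=.
set u := (1 + x) * (1 + y).
have hu : u != 0 by rewrite mulf_neq0.
have hxy : x * y != 0 by rewrite mulf_neq0.
rewrite big_mkord.
have -> : \sum_(j < m) Acoef x y m.+1 j / ((1 + x) ^+ (m - j) * (1 + y) ^+ (m - j))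
   = \sum_(j < m) ((-1) ^+ m.+1 / (x * y * u ^+ m)) *
        ((- u) ^+ j * ee x y j (m.+1 - j)%N).
  apply: eq_bigr => j _; have hj := ltn_ord j.
  rewrite Acoef_ee; last by apply: ltnW.
  have hm : u ^+ m = u ^+ (m - j) * u ^+ j by rewrite -exprD subnK // ltnW.
  rewrite hm -exprMn -/u (exprNn u) exprD.
  field.
  by rewrite hx hy !(expf_neq0 _ hu).
rewrite -mulr_sumr.
have hD := D_val x y m.+1.
rewrite /DD /TT big_ord_recr big_ord_recr /= subnn subSnn ee_m1 ee_0 in hD.
rewrite /u; exact: final_alg.
Qed.
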